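(* Let $m$ and $n$ be two even positive integers with $m\leq n$, and let $p$ be a positive integer. A magic column rectangle $MCR(m^{(1)},n^{(1)};p)$ exists if and only if both of the following hold: (i) $m+n\equiv 0 \pmod 4$; and (ii) $1=2(2pn+1)^2-(2pm+2pn+1)^2$ or $m\geq (\sqrt{2}-1)n+\frac{\sqrt{2}-1}{2p}$.
   Context: A magic column rectangle $MCR(m^{(1)},n^{(1)};p)$ (with $m\le n$) is an $(m+n)\times p$ matrix whose entries are $1,2,\ldots,(m+n)p$, each appearing exactly once, which is partitioned into two blocks, the first consisting of $m$ rows (an $m\times p$ submatrix) and the second of the remaining $n$ rows (an $n\times p$ submatrix), such that the sum of the entries in every column of each block is the same constant (necessarily $\frac{(m+n)(mp+np+1)}{4}$). *)

(* Defs.v *)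
From mathcomp Require Import all_boot all_algebra.
From Stdlib Require Reals.
Set Implicit Arguments. Unset Strict Implicit. Unset Printing Implicit Defensive.

Definition is_MCR (m n p : nat) (A : 'M[nat]_(m + n, p)) : Prop :=
  (forall i j, 1 <= A i j <= (m + n) * p)%N /\
  (forall i1 j1 i2 j2, A i1 j1 = A i2 j2 -> i1 = i2 /\ j1 = j2) /\
  exists c : nat, forall j : 'I_p,
    (\sum_(i < m) A (lshift n i) j)%N = c /\
    (\sum_(i < n) A (rshift m i) j)%N = c.

Definition MCR_exists (m n p : nat) : Prop :=
  exists A : 'M[nat]_(m + n, p), is_MCR A.

Definition pell_cond (m n p : nat) : Prop :=
  ((1 : int) = 2 * Posz ((2 * p * n + 1) ^ 2)%N - Posz ((2 * p * m + 2 * p * n + 1) ^ 2)%N)%R.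

Definition sqrt_cond (m n p : nat) : Prop :=
  let s2m1 := Rdefinitions.Rminus (R_sqrt.sqrt (Raxioms.INR 2)) (Raxioms.INR 1) in
  Rdefinitions.Rle
    (Rdefinitions.Rplus (Rdefinitions.Rmult s2m1 (Raxioms.INR n))
       (Rdefinitions.Rdiv s2m1 (Rdefinitions.Rmult (Raxioms.INR 2) (Raxioms.INR p))))
    (Raxioms.INR m).

(* Main.v *)
Set Implicit Arguments. Unset Strict Implicit.
Set Warnings "-notation-overridden,-ambiguous-paths,-notation-incompatible-prefix".
Require Import Defs.
From mathcomp Require Import all_boot all_algebra.
From mathcomp Require Import zify.

Definition posf (p w y u z : nat) : nat :=
  if z < w * p then y + z + (u * p <= z)
  else if z - w * p < y then z - w * p
  else if z - w * p == y then y + u * p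
  else z.

Lemma posf_lt p w y u z H : u <= w -> y + w * p < H -> z < H -> posf p w y u z < H.
Proof.
move=> uw yH zH; have up : u * p <= w * p by rewrite leq_mul2r uw orbT.
rewrite /posf; repeat case: ifP; lia.
Qed.

Lemma posf_inj p w y u z1 z2 H : u <= w -> y + w * p < H -> z1 < H -> z2 < H ->
  posf p w y u z1 = posf p w y u z2 -> z1 = z2.
Proof.
move=> uw yH z1H z2H; have up : u * p <= w * p by rewrite leq_mul2r uw orbT.
rewrite /posf; repeat case: ifP; lia.
Qed.

Definition jj (p w r j : nat) := if (r < w) && odd r then p.-1 - j else j.

Lemma jj_lt p w r j : j < p -> jj p w r j < p.
Proof. rewrite /jj; case: ifP; lia. Qed.

Lemma jj_inj p w r j1 j2 : j1 < p -> j2 < p -> jj p w r j1 = jj p w r j2 -> j1 = j2.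
Proof. rewrite /jj; case: ifP; lia. Qed.

Lemma rpj_lt r h p j : r < h -> j < p -> r * p + j < h * p.
Proof. move=> rh jp; nia. Qed.

Lemma rpj_inj r1 r2 p j1 j2 : j1 < p -> j2 < p -> r1 * p + j1 = r2 * p + j2 -> r1 = r2 /\ j1 = j2.
Proof.
move=> j1p j2p E; have p0 : 0 < p by lia.
have E1 := congr1 (divn^~ p) E; have E2 := congr1 (modn^~ p) E; move: E1 E2 => /=.
rewrite !divnMDl // !divn_small // !modnMDl !modn_small //; lia.
Qed.

Definition Kf p w y u r j := (posf p w y u (r * p + jj p w r j)).+1.

Lemma Kf_range p w y u h r j : u <= w -> y + w * p < p * h -> r < h -> j < p ->
  0 < Kf p w y u r j <= p * h.
Proof.
move=> uw yH rh jp; rewrite /Kf ltn0Sn /=.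
apply: posf_lt => //; rewrite [p * h]mulnC; apply: rpj_lt => //; exact: jj_lt.
Qed.

Lemma Kf_inj p w y u h r1 r2 j1 j2 : u <= w -> y + w * p < p * h -> r1 < h -> r2 < h -> j1 < p -> j2 < p ->
  Kf p w y u r1 j1 = Kf p w y u r2 j2 -> r1 = r2 /\ j1 = j2.
Proof.
move=> uw yH r1h r2h j1p j2p [] E.
have L1 := rpj_lt r1h (jj_lt w r1 j1p); have L2 := rpj_lt r2h (jj_lt w r2 j2p).
rewrite [h * p]mulnC in L1 L2.
have := posf_inj uw yH L1 L2 E.
move=> /(rpj_inj (jj_lt w r1 j1p) (jj_lt w r2 j2p)) [E1 E2]; subst r2; split => //.
exact: jj_inj E2.
Qed.

Definition rowr (m w f g i : nat) : nat :=
  if i < w then i else if i < w + f then i else if i < m then i - f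
  else if i < m + w then i - m else if i < m + w + g then i - m + f else i - m - g + f.
Definition rows (m w f g i : nat) : bool :=
  if i < w then true else if i < w + f then false else if i < m then true
  else if i < m + w then false else if i < m + w + g then false else true.

Lemma rowr_lt m n w f g i : m = w + f + f -> n = w + g + g -> i < m + n -> rowr m w f g i < w + f + g.
Proof. move=> Hm Hn Hi; rewrite /rowr; repeat case: ifP; lia. Qed.

Lemma row_inj m n w f g i1 i2 : m = w + f + f -> n = w + g + g -> i1 < m + n -> i2 < m + n ->
  rowr m w f g i1 = rowr m w f g i2 -> rows m w f g i1 = rows m w f g i2 -> i1 = i2.
Proof. move=> Hm Hn H1 H2; rewrite /rowr /rows; repeat case: ifP; lia. Qed.

Definition entry p w y u m f g i j :=
  let S := (2 * (p * (w + f + g))).+1 in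
  if rows m w f g i then S - Kf p w y u (rowr m w f g i) j else Kf p w y u (rowr m w f g i) j.

Lemma ub_lt u p i x : 0 < p -> x < p -> (u * p <= i * p + x) = (u <= i).
Proof. move=> p0 xp; apply/idP/idP => H; nia. Qed.

Lemma sumF p w u j s : 0 < p -> j < p -> 2 * s <= w ->
  \sum_(0 <= i < 2 * s) (i * p + jj p w i j + (u <= i)) + minn u (2 * s) = 2 * p * s ^ 2 + s.
Proof.
move=> p0 jp; elim: s => [|s IH] Hs.
  rewrite muln0 big_geq //; lia.
have -> : 2 * s.+1 = (2 * s).+1.+1 by lia.
rewrite big_nat_recr // big_nat_recr //=.
have := IH ltac:(lia).
rewrite /jj.
have od : odd (2 * s) = false by rewrite oddM.
have -> : (2 * s < w) && odd (2 * s) = false by rewrite od andbF.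
have -> : ((2 * s).+1 < w) && odd (2 * s).+1 = true by rewrite /= od andbT; apply/ltP; lia.
move=> E. nia.
Qed.

Lemma sumK p w y u t q h j : 0 < p -> j < p -> w = 2 * t -> u <= w -> y + w * p < p * h ->
  2 * t + 2 * t * y + 2 * p * t ^ 2 + t = q * (2 * (p * h)).+1 + u ->
  \sum_(i < w) Kf p w y u i j = q * (2 * (p * h)).+1.
Proof.
move=> p0 jp Ew uw yH E.
rewrite -(big_mkord xpredT (fun i => Kf p w y u i j)).
rewrite (eq_big_nat _ _ (F2 := fun i => (i * p + jj p w i j + (u <= i)) + y.+1)); last first.
  move=> i /andP [_ iw]; rewrite /Kf /posf.
  have L := rpj_lt iw (jj_lt w i jp); rewrite L ub_lt //; last exact: jj_lt.
  lia.
rewrite big_split /= sum_nat_const_nat.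
have := sumF u p0 jp (s := t) (w := w) ltac:(lia).
rewrite -Ew; have -> : minn u w = u by lia.
move=> H; lia.
Qed.

Lemma sum_pair (k : nat) (F : nat -> nat) S : (forall i, i < k -> F i <= S) ->
  \sum_(i < k) (S - F i) + \sum_(i < k) F i = k * S.
Proof.
move=> HF; rewrite -big_split /=.
rewrite (eq_bigr (fun _ => S)) => [|i _]; last by rewrite subnK // HF.
by rewrite sum_nat_const card_ord.
Qed.

Lemma top_sum p w y u f g j (h := w + f + g) : 0 < p -> j < p -> u <= w -> y + w * p < p * h ->
  \sum_(i < w + f + f) entry p w y u (w + f + f) f g i j + \sum_(i < w) Kf p w y u i j
   = (w + f) * (2 * (p * h)).+1.
Proof.
move=> p0 jp uw yH.
have KS : forall r, r < h -> Kf p w y u r j <= (2 * (p * h)).+1.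
  move=> r rh; have := Kf_range uw yH rh jp; lia.
rewrite big_split_ord big_split_ord /=.
rewrite (eq_bigr (fun i : 'I_w => (2 * (p * h)).+1 - Kf p w y u i j)); last first.
  move=> i _; have hi := ltn_ord i; rewrite /entry.
  have [-> ->] : rowr (w + f + f) w f g i = i /\ rows (w + f + f) w f g i = true.
    by rewrite /rowr /rows; split; repeat case: ifP; lia.
  by [].
rewrite (eq_bigr (fun i : 'I_f => Kf p w y u (w + i) j)); last first.
  move=> i _; have hi := ltn_ord i; rewrite /entry.
  have [-> ->] : rowr (w + f + f) w f g (w + i) = w + i /\ rows (w + f + f) w f g (w + i) = false.
    by rewrite /rowr /rows; split; repeat case: ifP; lia.
  by [].
have -> : \sum_(i < f) entry p w y u (w + f + f) f g (w + f + i) j =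
   \sum_(i < f) ((2 * (p * h)).+1 - Kf p w y u (w + i) j).
  apply: eq_bigr => i _; have hi := ltn_ord i; rewrite /entry.
  have [-> ->] : rowr (w + f + f) w f g (w + f + i) = w + i /\ rows (w + f + f) w f g (w + f + i) = true.
    by rewrite /rowr /rows; split; repeat case: ifP; lia.
  by [].
have A1 := sum_pair (k := w) (F := fun i => Kf p w y u i j) (S := (2 * (p * h)).+1).
have A2 := sum_pair (k := f) (F := fun i => Kf p w y u (w + i) j) (S := (2 * (p * h)).+1).
have B1 := A1 (fun i ilt => KS i ltac:(rewrite /h; lia)).
have B2 := A2 (fun i ilt => KS (w + i) ltac:(rewrite /h; lia)).
cbv beta in B1, B2.
have E : forall a b c d : nat, a + b + c + d = (a + d) + (c + b) by move=> *; lia.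
by rewrite E B1 B2 mulnDl.
Qed.

Lemma bot_sum p w y u f g j (h := w + f + g) : 0 < p -> j < p -> u <= w -> y + w * p < p * h ->
  \sum_(i < w + g + g) entry p w y u (w + f + f) f g (w + f + f + i) j
   = \sum_(i < w) Kf p w y u i j + g * (2 * (p * h)).+1.
Proof.
move=> p0 jp uw yH.
have KS : forall r, r < h -> Kf p w y u r j <= (2 * (p * h)).+1.
  move=> r rh; have := Kf_range uw yH rh jp; lia.
rewrite big_split_ord big_split_ord /=.
have -> : \sum_(i < w) entry p w y u (w + f + f) f g (w + f + f + i) j =
   \sum_(i < w) Kf p w y u i j.
  apply: eq_bigr => i _; have hi := ltn_ord i; rewrite /entry.
  have [-> ->] : rowr (w + f + f) w f g (w + f + f + i) = i /\ rows (w + f + f) w f g (w + f + f + i) = false.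
    by rewrite /rowr /rows; split; repeat case: ifP; lia.
  by [].
have -> : \sum_(i < g) entry p w y u (w + f + f) f g (w + f + f + (w + i)) j =
   \sum_(i < g) Kf p w y u (w + f + i) j.
  apply: eq_bigr => i _; have hi := ltn_ord i; rewrite /entry.
  have [-> ->] : rowr (w + f + f) w f g (w + f + f + (w + i)) = w + f + i /\ rows (w + f + f) w f g (w + f + f + (w + i)) = false.
    by rewrite /rowr /rows; split; repeat case: ifP; lia.
  by [].
have -> : \sum_(i < g) entry p w y u (w + f + f) f g (w + f + f + (w + g + i)) j =
   \sum_(i < g) ((2 * (p * h)).+1 - Kf p w y u (w + f + i) j).
  apply: eq_bigr => i _; have hi := ltn_ord i; rewrite /entry.
  have [-> ->] : rowr (w + f + f) w f g (w + f + f + (w + g + i)) = w + f + i /\ rows (w + f + f) w f g (w + f + f + (w + g + i)) = true.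
    by rewrite /rowr /rows; split; repeat case: ifP; lia.
  by [].
have B2 := sum_pair (k := g) (F := fun i => Kf p w y u (w + f + i) j) (S := (2 * (p * h)).+1)
   (fun i ilt => KS (w + f + i) ltac:(rewrite /h; lia)).
cbv beta in B2.
have E : forall a b c : nat, a + b + c = a + (c + b) by move=> *; lia.
by rewrite E B2.
Qed.

Lemma construct m n p w t f g y u q : 0 < p -> m = w + f + f -> n = w + g + g -> w = 2 * t ->
  w + f = 2 * q + g -> u <= w -> y + w * p < p * (w + f + g) ->
  2 * t + 2 * t * y + 2 * p * t ^ 2 + t = q * (2 * (p * (w + f + g))).+1 + u ->
  MCR_exists m n p.
Proof.
move=> p0 Hm Hn Hw Hq uw yH E; subst m n.
exists (\matrix_(i < (w + f + f) + (w + g + g), j < p) entry p w y u (w + f + f) f g i j)%R.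
have NE : (w + f + f + (w + g + g)) * p = 2 * (p * (w + f + g)) by clear; nia.
split; [|split].
- move=> i j; rewrite mxE /entry.
  have ri := rowr_lt (erefl (w + f + f)) (erefl (w + g + g)) (ltn_ord i).
  have KR := Kf_range uw yH ri (ltn_ord j).
  rewrite NE; case: rows; lia.
- move=> i1 j1 i2 j2; rewrite !mxE /entry.
  have r1 := rowr_lt (erefl (w + f + f)) (erefl (w + g + g)) (ltn_ord i1).
  have r2 := rowr_lt (erefl (w + f + f)) (erefl (w + g + g)) (ltn_ord i2).
  have K1 := Kf_range uw yH r1 (ltn_ord j1).
  have K2 := Kf_range uw yH r2 (ltn_ord j2).
  move=> E0.
  have [Es EK] : rows (w + f + f) w f g i1 = rows (w + f + f) w f g i2 /\
      Kf p w y u (rowr (w + f + f) w f g i1) j1 = Kf p w y u (rowr (w + f + f) w f g i2) j2.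
    move: E0; case: (rows _ _ _ _ i1); case: (rows _ _ _ _ i2) => E0; split => //; lia.
  have [Er Ej] := Kf_inj uw yH r1 r2 (ltn_ord j1) (ltn_ord j2) EK.
  have Ei := row_inj (erefl (w + f + f)) (erefl (w + g + g)) (ltn_ord i1) (ltn_ord i2) Er Es.
  by split; apply: ord_inj.
- exists ((q + g) * (2 * (p * (w + f + g))).+1) => j; split.
  + rewrite (eq_bigr (fun i : 'I_(w + f + f) => entry p w y u (w + f + f) f g i j)); last first.
      by move=> i _; rewrite mxE.
    have T := top_sum (f := f) (g := g) (j := j) p0 (ltn_ord j) uw yH; cbv zeta in T.
    have K := sumK p0 (ltn_ord j) Hw uw yH E.
    apply: (@addIn (\sum_(i < w) Kf p w y u i j)); rewrite T K Hq.
    move: (2 * (p * (w + f + g))).+1 => S; clear; lia.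
  + rewrite (eq_bigr (fun i : 'I_(w + g + g) => entry p w y u (w + f + f) f g (w + f + f + i) j)); last first.
      by move=> i _; rewrite mxE.
    have T := bot_sum (f := f) (g := g) (j := j) p0 (ltn_ord j) uw yH; cbv zeta in T.
    have K := sumK p0 (ltn_ord j) Hw uw yH E.
    rewrite T K; move: (2 * (p * (w + f + g))).+1 => S; clear; lia.
Qed.

Lemma Gs B (s : seq nat) : uniq s -> (forall x, x \in s -> 0 < x <= B) ->
  size s * (size s).+1 <= 2 * sumn s.
Proof.
elim: B s => [|B IH] s us Hs.
  case: s us Hs => [|x s] //= _ Hs; have := Hs x (mem_head _ _); lia.
case Bs: (B.+1 \in s); last first.
  apply: IH => // x xs; have := Hs x xs; have : x != B.+1 by apply/eqP => E; rewrite -E xs in Bs.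
  move=> /eqP; lia.
have Ps := perm_to_rem Bs.
rewrite (perm_sumn Ps) /=.
have Hr := IH (rem B.+1 s) (rem_uniq _ us).
have Sr := size_rem Bs.
have Ksz : size s <= B.+1.
  rewrite -(size_iota 1 B.+1); apply: uniq_leq_size => // x xs.
  rewrite mem_iota; have := Hs x xs; lia.
have : size (rem B.+1 s) * (size (rem B.+1 s)).+1 <= 2 * sumn (rem B.+1 s).
  apply: Hr => x; rewrite (mem_rem_uniq _ us) inE => /andP [xB xs].
  have := Hs x xs; move: xB => /eqP; lia.
rewrite Sr.
have s0 : 0 < size s by case: (s) Bs.
move: s0 Ksz; case: (size s) => [|K] // _ /= KB H.
nia.
Qed.

Lemma G_fin (T : finType) (f : T -> nat) B : injective f -> (forall x, 0 < f x <= B) ->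
  #|T| * #|T|.+1 <= 2 * \sum_x f x.
Proof.
move=> fi fB.
have U : uniq (map f (enum T)) by rewrite map_inj_uniq // enum_uniq.
have M : forall x, x \in map f (enum T) -> 0 < x <= B by move=> x /mapP [y _ ->].
have H := Gs U M.
by rewrite size_map -cardE sumnE big_map big_enum /= in H.
Qed.

Lemma necessity m n p (A : 'M[nat]_(m + n, p)) : 0 < p -> is_MCR A ->
  exists c, 4 * c = (m + n) * ((m + n) * p + 1) /\ n * p * (n * p + 1) <= 2 * p * c.
Proof.
move=> p0 [R [I [c Hc]]]; exists c.
set N := (m + n) * p.
have Stot : \sum_(x : 'I_(m + n) * 'I_p) A x.1 x.2 = p * (2 * c).
  rewrite -(pair_bigA _ (fun i j => A i j)) /= exchange_big /=.
  rewrite (eq_bigr (fun _ => 2 * c)) => [|j _]; first by rewrite sum_nat_const card_ord.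
  by rewrite big_split_ord /= (proj1 (Hc j)) (proj2 (Hc j)); lia.
have Inj : injective (fun x : 'I_(m + n) * 'I_p => A x.1 x.2).
  by move=> [i1 j1] [i2 j2] /= E; have [-> ->] := I _ _ _ _ E.
have L1 := @G_fin _ (fun x : 'I_(m + n) * 'I_p => A x.1 x.2) N Inj (fun x => R x.1 x.2).
rewrite card_prod !card_ord Stot -/N in L1.
have Inj2 : injective (fun x : 'I_(m + n) * 'I_p => N.+1 - A x.1 x.2).
  move=> [i1 j1] [i2 j2] /= E; have := R i1 j1; have := R i2 j2; move=> H1 H2.
  have E' : A i1 j1 = A i2 j2 by lia.
  by have [-> ->] := I _ _ _ _ E'.
have B2 : forall x : 'I_(m + n) * 'I_p, 0 < N.+1 - A x.1 x.2 <= N.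
  by move=> x; have := R x.1 x.2; lia.
have L2 := @G_fin _ (fun x : 'I_(m + n) * 'I_p => N.+1 - A x.1 x.2) N Inj2 B2.
have S2 : \sum_(x : 'I_(m + n) * 'I_p) (N.+1 - A x.1 x.2) + \sum_(x : 'I_(m + n) * 'I_p) A x.1 x.2
    = N * N.+1.
  rewrite -big_split /= (eq_bigr (fun _ => N.+1)) => [|x _]; last by have := R x.1 x.2; lia.
  by rewrite sum_nat_const card_prod !card_ord.
rewrite card_prod !card_ord -/N in L2.
rewrite Stot in S2.
have Eq : p * (4 * c) = p * ((m + n) * ((m + n) * p + 1)).
  have S2' : \sum_(x : 'I_(m + n) * 'I_p) (N.+1 - A x.1 x.2) = N * N.+1 - p * (2 * c) by lia.
  rewrite S2' in L2.
  have E1 : N * N.+1 = p * (4 * c) by lia.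
  rewrite -E1 /N; clear; nia.
split; first by move/eqP: Eq; rewrite eqn_pmul2l // => /eqP.
have Sbot : \sum_(x : 'I_n * 'I_p) A (rshift m x.1) x.2 = p * c.
  rewrite -(pair_bigA _ (fun i j => A (rshift m i) j)) /= exchange_big /=.
  rewrite (eq_bigr (fun _ => c)) => [|j _]; first by rewrite sum_nat_const card_ord.
  exact: (proj2 (Hc j)).
have Inj3 : injective (fun x : 'I_n * 'I_p => A (rshift m x.1) x.2).
  by move=> [i1 j1] [i2 j2] /= E; have [/rshift_inj -> ->] := I _ _ _ _ E.
have L3 := @G_fin _ (fun x : 'I_n * 'I_p => A (rshift m x.1) x.2) N Inj3 (fun x => R _ x.2).
rewrite card_prod !card_ord Sbot in L3.
lia.
Qed.

Lemma crossing (P : nat -> bool) a b : a <= b -> P a -> ~~ P b ->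
  exists t, [/\ a <= t, t < b, P t & ~~ P t.+1].
Proof.
elim: b => [|b IH] ab Pa Pb.
  have a0 : a = 0 by lia. by subst a; rewrite Pa in Pb.
case Pb': (P b).
  exists b; split => //; have : a != b.+1 by apply/eqP => E; subst a; rewrite Pa in Pb.
  lia.
have ab' : a <= b by case: (ltngtP a b.+1) ab => // E; subst a; rewrite Pa in Pb.
have [t [H1 H2 H3 H4]] := IH ab' Pa (negbT Pb'); exists t; split => //; lia.
Qed.


Lemma yu w D V : 0 < D -> V <= w * D -> exists y u, [/\ u <= w, y < D & V + u = w * y + w].
Proof.
move=> D0 VD.
case w0: (w == 0).
  move/eqP: w0 => w0; subst w; exists 0, 0; split => //; lia.
have wp : 0 < w by rewrite lt0n w0.
case: (ltnP V (w * D)) => VD'.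
  have E1 := divn_eq V w.
  have E2 : V %% w < w by rewrite ltn_mod.
  have E3 : V %/ w < D by rewrite ltn_divLR // mulnC.
  exists (V %/ w), (w - V %% w).
  move: E1 E2 E3; move: (V %/ w) (V %% w) => y r E1 E2 E3.
  split => //; [exact: leq_subr | rewrite E1; lia].
exists D.-1, 0; split => //; first lia.
have -> : V = w * D by apply/eqP; rewrite eqn_leq VD VD'.
clear VD VD'; move: D0; case: D => // D _ /=; rewrite mulnS; lia.
Qed.

Lemma suff_ab p a b : 0 < p -> 0 < b -> 4 * p * a ^ 2 + a <= 2 * p * b ^ 2 ->
  MCR_exists (2 * b) (2 * b + 4 * a) p.
Proof.
move=> p0 b0 nec.
have ab : a <= b.
  case: (leqP a b) => // ba; have : 2 * p * b ^ 2 < 4 * p * a ^ 2 + a.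
    have : b ^ 2 <= a ^ 2 by rewrite leq_exp2r //; exact: ltnW.
    move=> h; have := leq_mul (leqnn (2 * p)) h; nia.
  lia.
have [t [ta tb up lo]] : exists t, [/\ a <= t, t <= b, 2 * p * t ^ 2 <= a * (4 * p * (a + b) + 1)
     & t * (2 * p * t + 1) + a * (4 * p * (a + b) + 1) <= t * (4 * p * (a + b) + 1)].
  case Pb: (2 * p * b ^ 2 <= a * (4 * p * (a + b) + 1)).
    exists b; split => //; lia.
  have Pa : 2 * p * a ^ 2 <= a * (4 * p * (a + b) + 1) by nia.
  have [t [H1 H2 H3 H4]] := crossing (P := fun t => 2 * p * t ^ 2 <= a * (4 * p * (a + b) + 1)) ab Pa (negbT Pb).
  exists t; split => //; first lia.
  rewrite /= -ltnNge in H4.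
  case t0: (t == 0).
    move/eqP: t0 => t0; subst t; have -> : a = 0 by lia. lia.
  have t1 : 0 < t by rewrite lt0n t0.
  have a1 : 0 < a.
    case: (posnP a) H3 => // a0; subst a; rewrite mul0n; nia.
  have h1 : t + 2 <= a + b by lia.
  have h2 := leq_mul (leqnn (4 * p * t)) h1.
  have h3 : p <= p * t by rewrite leq_pmulr.
  nia.
have [q Eq] : exists q, t = a + q by exists (t - a); lia.
subst t.
have [f Ef] : exists f, b = a + q + f by exists (b - (a + q)); lia.
subst b.
have [V EV] : exists V, V + (a + q) * (2 * p * (a + q) + 1) = q * (4 * p * (a + (a + q + f)) + 1).
  exists (q * (4 * p * (a + (a + q + f)) + 1) - (a + q) * (2 * p * (a + q) + 1)).
  rewrite subnK //; nia.
have VD : V <= (2 * (a + q)) * (2 * p * (a + f)) by nia.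
have D0 : 0 < 2 * p * (a + f).
  case: (posnP (a + f)) => af; last by rewrite !muln_gt0 p0 af.
  have a0 : a = 0 by lia. have f0 : f = 0 by lia. subst a f.
  have q0 : q = 0.
    move: up; rewrite !add0n mul0n; case: (posnP q) => // qp H.
    have : 0 < 2 * p * q ^ 2 by rewrite !muln_gt0 p0 /=; nia.
    lia.
  subst q; by [].
have [y [u [uw yD Eyu]]] := yu D0 VD.
apply: (@construct _ _ p (2 * (a + q)) (a + q) f (2 * a + f) y u q p0) => //; try lia; nia.
Qed.
From Stdlib Require Import Reals Lra Psatz.
Lemma INR_leq a b : (a <= b)%N <-> (INR a <= INR b)%R.
Proof. split => H; [apply: le_INR; exact/leP | apply/leP; exact: INR_le]. Qed.

Lemma sqrt2_equiv (a b : R) : (0 <= a)%R -> (0 <= b)%R -> ((sqrt 2 * a <= b)%R <-> (2 * (a * a) <= b * b)%R).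
Proof.
move=> a0 b0; have s2 := sqrt_sqrt 2 ltac:(lra); have s0 := sqrt_pos 2.
split => H.
  have : (0 <= sqrt 2 * a)%R by nra.
  nra.
apply: Rnot_lt_le => H2. nra.
Qed.

Lemma sqrt_equiv m n p : (0 < p)%N -> sqrt_cond m n p <->
  (2 * ((2 * p * n + 1) * (2 * p * n + 1)) <= (2 * p * m + 2 * p * n + 1) * (2 * p * m + 2 * p * n + 1))%N.
Proof.
move=> p0; rewrite /sqrt_cond INR_leq.
have -> : (2 * p * m + 2 * p * n + 1 = 2 * p * m + (2 * p * n + 1))%N by lia.
rewrite !mult_INR !plus_INR !mult_INR.
have zp : (0 < INR p)%R by apply: lt_0_INR; apply/ltP.
have x0 := pos_INR n; have y0 := pos_INR m.
have -> : INR 2 = 2%R by simpl; lra.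
have -> : INR 1 = 1%R by simpl; lra.
rewrite -sqrt2_equiv; try nra.
have E : forall s : R, (s * INR n + s / (2 * INR p) = s * (2 * INR p * INR n + 1) / (2 * INR p))%R.
  move=> s; field; lra.
rewrite E.
split => H.
  have := Rmult_le_compat_r (2 * INR p) _ _ ltac:(lra) H.
  rewrite /Rdiv Rmult_assoc Rinv_l; [|lra]. lra.
apply: (Rmult_le_reg_r (2 * INR p)); first lra.
rewrite /Rdiv Rmult_assoc Rinv_l; [|lra]. lra.
Qed.

Local Open Scope nat_scope.

Theorem theorem8 (m n p : nat) :
  (0 < m)%N -> (0 < n)%N -> ~~ odd m -> ~~ odd n -> (m <= n)%N -> (0 < p)%N ->
  (MCR_exists m n p <->
     ((m + n) %% 4 = 0)%N /\ (pell_cond m n p \/ sqrt_cond m n p)).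
Proof.
move=> m0 n0 om on mn p0.
have Pequiv : pell_cond m n p <-> 2 * ((2 * p * n + 1) * (2 * p * n + 1)) =
    (2 * p * m + 2 * p * n + 1) * (2 * p * m + 2 * p * n + 1) + 1.
  rewrite /pell_cond.
  move: (2 * p * n + 1) (2 * p * m + 2 * p * n + 1) => A0 B0.
  rewrite !expnS expn0 !muln1.
  split => H; lia.
have Sequiv := sqrt_equiv m n p0.
have Hm : m = 2 * m./2 by have := odd_double_half m; rewrite (negbTE om) -mul2n; lia.
have Hn : n = 2 * n./2 by have := odd_double_half n; rewrite (negbTE on) -mul2n; lia.
split.
- move=> [A HA]; have [c [E4 Eb]] := necessity p0 HA.
  split.
  + set k := m./2 + n./2.
    have Ek : m + n = 2 * k by rewrite /k; lia.
    rewrite Ek in E4.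
    have H2 : 2 * c = k * (2 * k * p + 1) by lia.
    have Ok : odd k = false.
      have := congr1 odd H2; rewrite !oddM oddD !oddM /= andbT; by move=> <-.
    have Hk : k = 2 * k./2 by have := odd_double_half k; rewrite Ok -mul2n; lia.
    rewrite Ek Hk; lia.
  + have H1 : 2 * (n * (n * p + 1)) <= (m + n) * ((m + n) * p + 1).
      rewrite -(leq_pmul2l p0) -E4; lia.
    have nec : 2 * ((2 * p * n + 1) * (2 * p * n + 1)) <=
      (2 * p * m + 2 * p * n + 1) * (2 * p * m + 2 * p * n + 1) + 1.
      have H2 := leq_mul (leqnn (4 * p)) H1; lia.
    case: (leqP (2 * ((2 * p * n + 1) * (2 * p * n + 1)))
                ((2 * p * m + 2 * p * n + 1) * (2 * p * m + 2 * p * n + 1))) => H.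
      by right; apply/Sequiv.
    by left; apply/Pequiv; lia.
- move=> [H4 Hc].
  have nec : 2 * ((2 * p * n + 1) * (2 * p * n + 1)) <=
      (2 * p * m + 2 * p * n + 1) * (2 * p * m + 2 * p * n + 1) + 1.
    by case: Hc => [/Pequiv|/Sequiv]; lia.
  have Ek : m + n = 4 * ((m + n) %/ 4).
    by have := divn_eq (m + n) 4; rewrite H4 addn0 mulnC.
  move: Ek; move: ((m + n) %/ 4) => K Ek.
  have [b Eb] : exists b, m = 2 * b by exists m./2.
  have [a Ea] : exists a, n = 2 * b + 4 * a by exists (K - b); lia.
  have b0 : 0 < b by lia.
  rewrite Eb Ea in nec *.
  apply: suff_ab => //.
  rewrite !expnS !expn0 !muln1.
  have H16 : 16 * p * (4 * p * (a * a) + a) <= 16 * p * (2 * p * (b * b)) by lia.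
  by move: H16; rewrite leq_pmul2l // muln_gt0 p0.
Qed.
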